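(* Let $s,k\geq 2$ and $n\geq ks+1$. For any reflection $\alpha$ of $[n]$, i.e., any permutation of $[n]$ of the form $x\mapsto c-x \pmod n$ for some fixed $c$ (residues modulo $n$ taken in $[n]$), the automorphism of $\operatorname{KG}(n,k)_{s-\operatorname{stab}}$ given by $\{i_1,\dots,i_k\}\mapsto\{\alpha(i_1),\dots,\alpha(i_k)\}$ is not a shift of $\operatorname{KG}(n,k)_{s-\operatorname{stab}}$.
   Context: For integers $s,k\geq 2$ and $n\geq ks$, a subset $S\subseteq[n]=\{1,\dots,n\}$ is $s$-stable if $s\leq |i-j|\leq n-s$ for all distinct $i,j\in S$. The $s$-stable Kneser graph $\operatorname{KG}(n,k)_{s-\operatorname{stab}}$ has as vertices the $s$-stable $k$-subsets of $[n]$, two vertices being adjacent iff they are disjoint. Every permutation of $[n]$ in the dihedral group $D_{2n}$ (symmetries of the $n$-cycle $1,2,\dots,n$) induces an automorphism of $\operatorname{KG}(n,k)_{s-\operatorname{stab}}$ by acting elementwise on vertices. A shift of a graph $G$ is an automorphism $\phi$ of $G$ such that $u$ and $\phi(u)$ are adjacent for every vertex $u$. *)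

(* Defs.v *)
From mathcomp Require Import all_boot all_order.
Unset Printing Implicit Defensive.

(* Convention: the ground set [n] = {1,...,n} is represented by 'I_n, the
   ordinal i standing for the element i+1.  Differences |i-j| are invariant
   under this shift. *)

Definition stable (n s : nat) (S : {set 'I_n}) : bool :=
  [forall i in S, forall j in S,
     (i != j) ==> ((s <= (i - j) + (j - i)) && ((i - j) + (j - i) <= n - s))].

Definition skg_vertex (n k s : nat) (S : {set 'I_n}) : bool :=
  (#|S| == k) && stable n s S.

Definition skg_adj (n : nat) (S T : {set 'I_n}) : bool := [disjoint S & T].

Definition skg_automorphism (n k s : nat) (phi : {set 'I_n} -> {set 'I_n}) : Prop :=
  (forall S, skg_vertex n k s S -> skg_vertex n k s (phi S)) /\
  {in skg_vertex n k s &, injective phi} /\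
  (forall T, skg_vertex n k s T -> exists2 S, skg_vertex n k s S & phi S = T) /\
  (forall S T, skg_vertex n k s S -> skg_vertex n k s T ->
     skg_adj n S T = skg_adj n (phi S) (phi T)).

Definition skg_shift (n k s : nat) (phi : {set 'I_n} -> {set 'I_n}) : Prop :=
  skg_automorphism n k s phi /\
  (forall S, skg_vertex n k s S -> skg_adj n S (phi S)).

(* For x : 'I_n (element y = x+1), the residue of c - y mod n is
   r = (c + n*y - y) %% n in {0..n-1}; its representative in [n] is
   (if r = 0 then n else r), whose 0-based index is (r + n - 1) %% n. *)
Definition refl_idx (n c : nat) (x : 'I_n) : nat :=
  ((c + n * x.+1 - x.+1) %% n + n - 1) %% n.

Lemma refl_idx_lt (n c : nat) (x : 'I_n) : refl_idx n c x < n.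
Proof. by rewrite /refl_idx ltn_pmod // (leq_ltn_trans _ (ltn_ord x)). Qed.

Definition reflection (n c : nat) (x : 'I_n) : 'I_n := Ordinal (refl_idx_lt n c x).

Definition set_map (n : nat) (f : 'I_n -> 'I_n) (S : {set 'I_n}) : {set 'I_n} :=
  f @: S.

(* Main.v *)
Require Import Defs.
From mathcomp Require Import all_boot all_order.
From mathcomp Require Import zify.

Definition Dst (x y : nat) := (x - y) + (y - x).

Lemma modn_cases n x : 0 < n -> x < n + n ->
  (x %% n = x /\ x < n) \/ (x %% n = x - n /\ n <= x).
Proof.
move=> n0 hx; case: (ltnP x n) => h.
  by left; rewrite modn_small.
right; split => //.
rewrite -{1}(subnK h) modnDr modn_small //; lia.
Qed.

Lemma rot_ok n s a p q : a < n -> p < n -> q < n ->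
  s <= Dst p q <= n - s -> s <= Dst ((a+p) %% n) ((a+q) %% n) <= n - s.
Proof.
move=> ha hp hq; rewrite /Dst.
have n0 : 0 < n by lia.
have hp' : a + p < n + n by lia.
have hq' : a + q < n + n by lia.
case: (modn_cases _ _ n0 hp') => [[-> ?]|[-> ?]];
case: (modn_cases _ _ n0 hq') => [[-> ?]|[-> ?]]; lia.
Qed.

Definition pp (s b i : nat) := i * s + (if i is 0 then 0 else b).

Lemma pp_lt n k s b i : 2 <= s -> k * s + 1 <= n -> b <= 1 -> i < k -> pp s b i < n.
Proof.
move=> hs hn hb hi; rewrite /pp.
have h1 : i * s <= k.-1 * s by rewrite leq_mul2r; apply/orP; right; lia.
have h2 : k * s = k.-1 * s + s by rewrite addnC -mulSn prednK //; lia.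
case: i hi h1 => [|i] hi h1; lia.
Qed.

Lemma pp_dist n k s b i j : 2 <= s -> k * s + 1 <= n -> b <= 1 -> i < k -> j < k ->
  i != j -> s <= Dst (pp s b i) (pp s b j) <= n - s.
Proof.
move=> hs hn hb.
wlog lt_ij : i j / i < j.
  move=> H hi hj hne; case: (ltngtP i j) => h.
  - exact: H.
  - by rewrite /Dst addnC; apply: H => //; rewrite eq_sym.
  - by rewrite h eqxx in hne.
move=> hi hj _; rewrite /pp /Dst.
have h1 : i.+1 * s <= j * s by rewrite leq_mul2r; apply/orP; right.
have h2 : j * s <= k.-1 * s by rewrite leq_mul2r; apply/orP; right; lia.
have h3 : k * s = k.-1 * s + s by rewrite addnC -mulSn prednK //; lia.
rewrite mulSn in h1.
case: j lt_ij hj h1 h2 => [|j] // _ hj h1 h2.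
case: i hi h1 => [|i] hi h1; lia.
Qed.

Theorem mainTheorem8 (n k s c : nat) :
  2 <= s -> 2 <= k -> k * s + 1 <= n ->
  ~ skg_shift n k s (set_map n (reflection n c)).
Proof.
move=> hs hk hn [_ hsh].
have n0 : 0 < n by lia.
have hsn : 2 * s <= n.
  by apply: leq_trans hn; have := leq_mul2r s 2 k; rewrite hk orbT; lia.
have [a' [e [he heq]]] : exists a' e, (e = s \/ e = s.+1) /\
   (2 * a' + e + 2 = c %% n + 3 * n \/ 2 * a' + e + 2 = c %% n + 4 * n).
  set w := c %% n + 3 * n - s - 2.
  have hw := odd_double_half w; have hnn := odd_double_half n.
  have hc : c %% n < n by apply: ltn_pmod.
  case ow: (odd w) hw => /= hw.
    case on: (odd n) hnn => /= hnn.
      exists (w./2 + n./2 + 1), s; split; [by left|right]; rewrite -!muln2 in hw hnn; lia.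
    exists w./2, s.+1; split; [by right|left]; rewrite -!muln2 in hw hnn; lia.
  exists w./2, s; split; [by left|left]; rewrite -!muln2 in hw; lia.
set a := a' %% n.
have ha : a < n by apply: ltn_pmod.
have key : (2 * a + e + 2) %% n = c %% n.
  have -> : 2 * a + e + 2 = 2 * a + (e + 2) by lia.
  rewrite -modnDml modnMmr modnDml.
  have -> : 2 * a' + (e + 2) = 2 * a' + e + 2 by lia.
  case: heq => ->; rewrite addnC modnMDl modn_mod //.
have halpha : refl_idx n c (Ordinal ha) = (a + e) %% n.
  rewrite /refl_idx /=.
  rewrite -addnBA // modnDml addnBA //.
  apply/eqP; rewrite -(eqn_modDr (a + 2)).
  have h1 : a.+1 <= n * a.+1 by apply: leq_pmull.
  have h2 : n * a.+2 = n * a.+1 + n by rewrite mulnS; lia.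
  have -> : c + n * a.+1 - a.+1 + n - 1 + (a + 2) = a.+2 * n + c.
    rewrite [a.+2 * n]mulnC; lia.
  have -> : a + e + (a + 2) = 2 * a + e + 2 by lia.
  by rewrite modnMDl key.
set b := e - s.
have hb : b <= 1 by rewrite /b; lia.
pose g (i : 'I_k) : 'I_n := Ordinal (ltn_pmod (a + pp s b i) n0).
have gdist : forall i j : 'I_k, i != j -> s <= Dst (g i) (g j) <= n - s.
  move=> i j hij; apply: rot_ok => //; try exact: (pp_lt n k s b _ hs hn hb (ltn_ord _)).
  exact: (pp_dist n k s b i j hs hn hb (ltn_ord i) (ltn_ord j) _).
have ginj : injective g.
  move=> i j /(congr1 val) /= h; apply/eqP; apply: contraT => hne.
  have := gdist _ _ hne; rewrite /= h /Dst subnn; lia.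
set S := [set g i | i in 'I_k].
have hv : skg_vertex n k s S.
  apply/andP; split; first by rewrite card_imset // card_ord.
  apply/forallP => x; apply/implyP => /imsetP [i _ ->].
  apply/forallP => y; apply/implyP => /imsetP [j _ ->].
  apply/implyP => hne; apply: gdist; apply: contraNneq hne => ->; by [].
have hdis := hsh S hv.
have k0 : 0 < k by lia.
have k1 : 1 < k by lia.
have hg0 : val (g (Ordinal k0)) = a by rewrite /= /pp /= mul0n !addn0 modn_small.
have hg1 : val (g (Ordinal k1)) = (a + e) %% n.
  by rewrite /= /pp mul1n /b; congr (_ %% _); lia.
have hr : reflection n c (g (Ordinal k0)) = g (Ordinal k1).
  apply: val_inj; rewrite hg1 /= -halpha; congr refl_idx; exact: val_inj.
have hin1 : g (Ordinal k1) \in S by apply: imset_f.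
have hin2 : g (Ordinal k1) \in set_map n (reflection n c) S.
  by rewrite -hr; apply: imset_f; apply: imset_f.
by move: (disjointFr hdis hin1); rewrite hin2.
Qed.
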